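(* Let $\epsilon>0$ and let $A^\epsilon$ be an arbitrary selfadjoint operator in $\mathcal{H}$ with $\overline{W(A^\epsilon)}=[\inf W(A)-\epsilon,\sup W(A)+\epsilon]$. Define \[ T^\epsilon(\omega):=A^\epsilon-\omega^2-\frac{\omega^2}{c-id\omega-\omega^2}B,\quad \mathop{\rm dom} T^\epsilon(\omega)=\mathop{\rm dom} A^\epsilon,\quad \omega\in\mathcal{C}, \] and let $W_\Omega(T^\epsilon)$ be the enclosure of the numerical range of $T^\epsilon$ defined in the same way as $W_\Omega(T)$, i.e. with $\Omega$ replaced by $\overline{W(A^\epsilon)}\times\overline{W(B)}$. Then $\overline{W_\Omega^\epsilon(T)}\cap i\mathbb{R}=W_\Omega(T^\epsilon)\cap i\mathbb{R}$.
   Context: Let $\mathcal{H}$ be a Hilbert space, $A$ a selfadjoint operator in $\mathcal{H}$, $B$ a non-zero bounded selfadjoint operator in $\mathcal{H}$, and $c\geq 0$, $d>0$ real constants. Set $\theta:=\sqrt{c-d^2/4}$ (principal square root), $\delta_\pm:=\pm\theta-id/2$, $\mathcal{C}:=\mathbb{C}\setminus\{\delta_+,\delta_-\}$, and \[ T(\omega):=A-\omega^2-\frac{\omega^2}{c-id\omega-\omega^2}B,\quad \mathop{\rm dom} T(\omega)=\mathop{\rm dom} A,\quad \omega\in\mathcal{C}. \] $W(\cdot)$ denotes the numerical range of an operator. For $(\alpha,\beta)\in\mathbb{R}^2$ let $t_{(\alpha,\beta)}(\omega):=\alpha-\omega^2-\frac{\omega^2}{c-id\omega-\omega^2}\beta$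 and $p_{(\alpha,\beta)}(\omega):=(\alpha-\omega^2)(c-id\omega-\omega^2)-\beta\omega^2$, with roots $r_n(\alpha,\beta)$, $n=1,\dots,4$, ordered continuously in $(\alpha,\beta)$ and extended to $\alpha=\pm\infty$ by their limit values in $\overline{\mathbb{C}}=\mathbb{C}\cup\{\infty\}$. Let $\Omega:=\overline{W(A)}\times\overline{W(B)}\subset\overline{\mathbb{R}}\times\mathbb{R}$ and $W_\Omega(T):=\bigcup_{n=1}^4\bigcup_{(\alpha,\beta)\in\Omega}r_n(\alpha,\beta)$, an enclosure of the numerical range of $T$. For $\epsilon>0$ define the enclosure of the $\epsilon$-pseudonumerical range \[ W_\Omega^\epsilon(T):=W_\Omega(T)\cup\{\omega\in\mathcal{C}\setminus W_\Omega(T):\exists(\alpha,\beta)\in\Omega,\ |t_{(\alpha,\beta)}(\omega)|<\epsilon\}. \] *)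

(* Defs.v *)
From HB Require Import structures.
From mathcomp Require Import all_boot all_order all_algebra.
From mathcomp Require Import complex.
From mathcomp Require Import all_classical all_reals all_analysis.
Set Implicit Arguments. Unset Strict Implicit. Unset Printing Implicit Defensive.
Import Order.TTheory GRing.Theory Num.Theory.
Import numFieldNormedType.Exports.
Local Open Scope ring_scope.
Local Open Scope classical_set_scope.
Local Open Scope complex_scope.

Section HilbertOps.
Variable R : realType.
Local Notation C := R[i].

Definition hnorm (V : lmodType C) (ip : V -> V -> C) (x : V) : R :=
  Num.sqrt (complex.Re (ip x x)).

Definition is_inner_product (V : lmodType C) (ip : V -> V -> C) : Prop :=
  [/\ (forall x y z, ip (x + y) z = ip x z + ip y z),
      (forall (a : C) x y, ip (a *: x) y = a * ip x y),
      (forall x y, ip y x = (ip x y)^*),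
      (forall x, 0 <= ip x x) &
      (forall x, ip x x = 0 -> x = 0)].

Definition hcomplete (V : lmodType C) (ip : V -> V -> C) : Prop :=
  forall u : nat -> V,
    (forall e : R, 0 < e -> exists N, forall m n, (N <= m)%N -> (N <= n)%N ->
        hnorm ip (u m - u n) < e) ->
    exists l : V, forall e : R, 0 < e -> exists N, forall n, (N <= n)%N ->
        hnorm ip (u n - l) < e.

Definition is_hilbert (V : lmodType C) (ip : V -> V -> C) : Prop :=
  is_inner_product ip /\ hcomplete ip.

(** * (Possibly unbounded) operators: a map [A : V -> V] together with its domain
    [D : set V]; only the values of [A] on [D] are meaningful. *)

Definition is_subspace (V : lmodType C) (D : set V) : Prop :=
  D 0 /\ forall (a : C) x y, D x -> D y -> D (a *: x + y).

Definition linear_on (V : lmodType C) (D : set V) (A : V -> V) : Prop :=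
  forall (a : C) x y, D x -> D y -> A (a *: x + y) = a *: A x + A y.

Definition hdense (V : lmodType C) (ip : V -> V -> C) (D : set V) : Prop :=
  forall (x : V) (e : R), 0 < e -> exists2 y, D y & hnorm ip (x - y) < e.

(** [A] (densely defined on [D]) equals its adjoint [A^*]:
    [y \in dom A^*] with [A^* y = z]  iff  [<A x, y> = <x, z>] for all [x \in D]. *)
Definition selfadjoint (V : lmodType C) (ip : V -> V -> C) (D : set V)
    (A : V -> V) : Prop :=
  [/\ is_subspace D, linear_on D A, hdense ip D &
      forall y z : V, (forall x, D x -> ip (A x) y = ip x z) <-> (D y /\ z = A y)].

Definition bounded_selfadjoint (V : lmodType C) (ip : V -> V -> C)
    (B : V -> V) : Prop :=
  selfadjoint ip setT B /\
  exists M : R, forall x, hnorm ip (B x) <= M * hnorm ip x.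

(** Numerical range W(A) = { <A x, x> : x \in dom A, ||x|| = 1 }.  For a
    selfadjoint (symmetric) operator these values are real; we record
    their real parts, as a subset of R. *)
Definition numrange (V : lmodType C) (ip : V -> V -> C) (D : set V)
    (A : V -> V) : set R :=
  [set complex.Re (ip (A x) x) | x in [set x | D x /\ ip x x = 1]].

Definition numrange_cl_ext (V : lmodType C) (ip : V -> V -> C) (D : set V)
    (A : V -> V) : set (\bar R) :=
  closure [set (r%:E) | r in numrange ip D A].

Definition numrange_cl (V : lmodType C) (ip : V -> V -> C) (B : V -> V) : set R :=
  closure (numrange ip setT B).

Definition theta (c d : R) : C :=
  if 0 <= c - d ^+ 2 / 4 then (Num.sqrt (c - d ^+ 2 / 4))%:C
  else (Num.sqrt (d ^+ 2 / 4 - c))%:C * 'i.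
Definition delta_p (c d : R) : C := theta c d - 'i * (d / 2)%:C.
Definition delta_m (c d : R) : C := - theta c d - 'i * (d / 2)%:C.

Definition tfun (c d alpha beta : R) (w : C) : C :=
  alpha%:C - w ^+ 2 - w ^+ 2 / (c%:C - 'i * d%:C * w - w ^+ 2) * beta%:C.
Definition pfun (c d alpha beta : R) (w : C) : C :=
  (alpha%:C - w ^+ 2) * (c%:C - 'i * d%:C * w - w ^+ 2) - beta%:C * w ^+ 2.

(** W_Omega for Omega = OA x OB with OA in \bar R, OB in R: the union over
    (alpha,beta) in Omega of all roots r_n(alpha,beta).  For finite alpha these
    are the roots of p_(alpha,beta); for alpha = +oo or -oo the limit values
    of the roots are delta_+, delta_- and (twice) the point infinity of the
    Riemann sphere, which is not an element of C. *)
Definition W_Omega (c d : R) (OA : set (\bar R)) (OB : set R) : set C :=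
  [set w | exists alpha beta, [/\ OA alpha, OB beta &
      (exists2 a : R, alpha = a%:E & pfun c d a beta w = 0) \/
      ((alpha = +oo%E \/ alpha = -oo%E) /\ (w = delta_p c d \/ w = delta_m c d))]].

Definition W_Omega_eps (c d : R) (OA : set (\bar R)) (OB : set R) (eps : R) :
    set C :=
  W_Omega c d OA OB `|`
  [set w | [/\ w <> delta_p c d, w <> delta_m c d, ~ W_Omega c d OA OB w &
     exists alpha beta, [/\ OA alpha, OB beta &
        exists2 a : R, alpha = a%:E & `|tfun c d a beta w| < eps%:C]]].

Definition closure_inC (S : set C) : set C :=
  [set w | forall e : R, 0 < e -> exists2 z, S z & `|z - w| < e%:C].

Definition imag_axis : set C := [set w | complex.Re w = 0].

End HilbertOps.

(* Main.v *)
Require Import Defs.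
From HB Require Import structures.
From mathcomp Require Import all_boot all_order all_algebra.
From mathcomp Require Import complex.
From mathcomp Require Import all_classical all_reals all_analysis.
From mathcomp Require Import ring lra.
Import Order.TTheory GRing.Theory Num.Theory.
Import numFieldNormedType.Exports.
Set Implicit Arguments. Unset Strict Implicit. Unset Printing Implicit Defensive.
Local Open Scope ring_scope.
Local Open Scope classical_set_scope.
Local Open Scope complex_scope.

Section Cplx.
Variable R : realType.
Local Notation C := R[i].

Definition Nm (z : C) : R := complex.Re `|z|.

Lemma normE (z : C) : `|z| = (Nm z)%:C.
Proof. by rewrite /Nm normc_def. Qed.

Lemma Nm_ge0 z : 0 <= Nm z.
Proof. by rewrite /Nm normc_def /= sqrtr_ge0. Qed.

Lemma NmM z w : Nm (z * w) = Nm z * Nm w.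
Proof. by apply: complexI; rewrite rmorphM -!normE normrM. Qed.

Lemma NmD z w : Nm (z + w) <= Nm z + Nm w.
Proof. by rewrite -lecR rmorphD -!normE ler_normD. Qed.

Lemma NmN z : Nm (- z) = Nm z.
Proof. by rewrite /Nm normrN. Qed.

Lemma NmB z w : Nm (z - w) = Nm (w - z).
Proof. by rewrite /Nm distrC. Qed.

Lemma NmR (r : R) : Nm r%:C = `|r|.
Proof. by rewrite /Nm normc_def /= expr0n /= addr0 sqrtr_sqr. Qed.

Lemma Nm_eq0 z : (Nm z == 0) = (z == 0).
Proof. by rewrite -[z == 0]normr_eq0 normE -(inj_eq (@complexI R)). Qed.

Lemma Nm_lt z (e : R) : (`|z| < e%:C) = (Nm z < e).
Proof. by rewrite normE ltcR. Qed.

Lemma NmX z n : Nm (z ^+ n) = Nm z ^+ n.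
Proof. by elim: n => [|n IH]; rewrite ?expr0 ?NmR ?normr1 // !exprS NmM IH. Qed.

Lemma NmV z : Nm (z^-1) = (Nm z)^-1.
Proof. by apply: complexI; rewrite -normE normfV normE fmorphV. Qed.

Lemma NmBD z w : Nm z - Nm w <= Nm (z - w).
Proof. have := NmD (z - w) w; rewrite subrK; lra. Qed.

Lemma prod_lb (w0 : C) (rs : seq C) (e : R) : 0 <= e ->
  (forall z, z \in rs -> e <= Nm (w0 - z)) ->
  e ^+ size rs <= Nm (\prod_(z <- rs) (w0 - z)).
Proof.
move=> e0; elim: rs => [|z rs IH] H.
  by rewrite big_nil NmR normr1 expr0.
rewrite big_cons NmM /= exprS.
apply: ler_pM => //; first by rewrite exprn_ge0.
  by apply: H; rewrite inE eqxx.
by apply: IH => z' hz'; apply: H; rewrite inE hz' orbT.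
Qed.

Lemma RL4 (c3 c2 c1 c0 w0 : C) (e : R) : 0 < e ->
  Nm (w0 ^+ 4 + c3 * w0 ^+ 3 + c2 * w0 ^+ 2 + c1 * w0 + c0) < e ^+ 4 ->
  exists r, r ^+ 4 + c3 * r ^+ 3 + c2 * r ^+ 2 + c1 * r + c0 = 0 /\ Nm (r - w0) < e.
Proof.
move=> e0 hw.
pose Q : {poly C} := Poly [:: c0; c1; c2; c3].
pose P : {poly C} := 'X^4 + Q.
have hQ : (size Q < size ('X^4 : {poly C}))%N.
  by rewrite size_polyXn; apply: leq_ltn_trans (size_Poly _) _.
have evP x : P.[x] = x ^+ 4 + c3 * x ^+ 3 + c2 * x ^+ 2 + c1 * x + c0.
  by rewrite /P hornerD hornerXn horner_Poly /=; ring.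
have lP : lead_coef P = 1 by rewrite /P lead_coefDl // lead_coefXn.
have sP : size P = 5%N by rewrite /P size_polyDl // size_polyXn.
have [rs hrs] := closed_field_poly_normal P.
rewrite lP scale1r in hrs.
have srs : size rs = 4%N.
  by have := sP; rewrite hrs size_prod_XsubC => -[].
case: (pselect (exists2 z, z \in rs & Nm (z - w0) < e)) => [[z zin hz]|hno].
  exists z; split => //.
  have : root P z by rewrite hrs root_prod_XsubC.
  by rewrite /root evP => /eqP.
exfalso.
have : e ^+ 4 <= Nm (P.[w0]).
  rewrite hrs horner_prod.
  under eq_bigr => z _ do rewrite hornerXsubC.
  rewrite -srs; apply: prod_lb; first exact: ltW.
  move=> z zin; rewrite NmB; rewrite leNgt; apply/negP => hz.
  by apply: hno; exists z.
rewrite evP; lra.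
Qed.

End Cplx.


Section Q.
Variable R : realType.
Local Notation C := R[i].
Variables (c d : R).

Definition qf (w : C) : C := c%:C - 'i * d%:C * w - w ^+ 2.

Lemma theta2 : theta c d ^+ 2 = (c - d ^+ 2 / 4)%:C.
Proof.
rewrite /theta; case: ifP => h.
  by rewrite -rmorphXn sqr_sqrtr.
rewrite exprMn sqr_i -rmorphXn sqr_sqrtr; last first.
  by move/negbT: h; rewrite -ltNge; lra.
by rewrite mulrN1 -rmorphN opprB.
Qed.

Lemma q_fact w : qf w = - ((w - delta_p c d) * (w - delta_m c d)).
Proof.
rewrite /qf /delta_p /delta_m.
have -> : - ((w - (theta c d - 'i * (d / 2)%:C)) * (w - (- theta c d - 'i * (d / 2)%:C)))
   = - (w ^+ 2 + 'i * d%:C * w + ('i ^+ 2) * (d / 2)%:C ^+ 2 - theta c d ^+ 2).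
  by rewrite rmorphM /= fmorphV /= rmorph_nat; field.
rewrite theta2 sqr_i !rmorphB /= rmorphM /= fmorphV /= rmorph_nat.
have -> : (d ^+ 2 / 4)%:C = d%:C ^+ 2 / 4 :> C by rewrite rmorphM /= fmorphV rmorphXn /= rmorph_nat.
by field.
Qed.

Lemma q_eq0 w : qf w = 0 <-> (w = delta_p c d \/ w = delta_m c d).
Proof.
rewrite q_fact; split.
  move/eqP; rewrite oppr_eq0 mulf_eq0 !subr_eq0 => /orP[] /eqP; tauto.
by case=> ->; rewrite subrr ?mul0r ?mulr0 oppr0.
Qed.

Lemma t_p a b w : qf w != 0 -> tfun c d a b w = pfun c d a b w / qf w.
Proof. by move=> h; rewrite /tfun /pfun -/(qf w); field. Qed.

Lemma p_shift a a' b w : pfun c d a' b w = pfun c d a b w + (a' - a)%:C * qf w.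
Proof. by rewrite /pfun -/(qf w) rmorphB /=; ring. Qed.

Lemma p_exp a b v w : pfun c d a b w - v * qf w =
  w ^+ 4 + ('i * d%:C) * w ^+ 3 + (- c%:C - (a%:C - v) - b%:C) * w ^+ 2
  + (- ('i * d%:C * (a%:C - v))) * w + (a%:C - v) * c%:C.
Proof. by rewrite /pfun /qf; ring. Qed.

Lemma q_axis y : qf (0 +i* y) = (c + d * y + y ^+ 2)%:C.
Proof. by rewrite /qf !expr2 /=; simpc; apply/eqP; rewrite eq_complex /=; apply/andP; split; apply/eqP; ring. Qed.

Lemma sq_axis y : (0 +i* y) ^+ 2 = (- y ^+ 2)%:C :> C.
Proof. by rewrite !expr2 /=; simpc; apply/eqP; rewrite eq_complex /=; apply/andP; split; apply/eqP; ring. Qed.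

Lemma p_axis a b y : pfun c d a b (0 +i* y) = ((a + y ^+ 2) * (c + d * y + y ^+ 2) + b * y ^+ 2)%:C.
Proof.
rewrite /pfun -/(qf _) q_axis sq_axis.
by rewrite rmorphD rmorphM rmorphD /= rmorphM /= rmorphN /=; ring.
Qed.

End Q.


Section Hil.
Variable R : realType.
Local Notation C := R[i].
Variables (V : lmodType C) (ip : V -> V -> C) (hip : is_inner_product ip).

Lemma ReD (z w : C) : complex.Re (z + w) = complex.Re z + complex.Re w.
Proof. by case: z; case: w. Qed.
Lemma ReRM (r : R) (z : C) : complex.Re (r%:C * z) = r * complex.Re z.
Proof. by case: z => a b /=; rewrite mul0r subr0. Qed.
Lemma cjR (r : R) : Num.conj (r%:C) = r%:C :> C.
Proof. by apply/eqP; rewrite eq_complex /= oppr0 !eqxx. Qed.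
Lemma Re1 : complex.Re (1 : C) = 1. Proof. by []. Qed.

Lemma ipDl x y z : ip (x + y) z = ip x z + ip y z.
Proof. by case: hip. Qed.
Lemma ipZl (a : C) x y : ip (a *: x) y = a * ip x y.
Proof. by case: hip. Qed.
Lemma ipC x y : ip y x = (ip x y)^*.
Proof. by case: hip. Qed.
Lemma ipDr x y z : ip x (y + z) = ip x y + ip x z.
Proof. by rewrite ipC ipDl rmorphD /= -!ipC. Qed.
Lemma ipZr (a : C) x y : ip x (a *: y) = a^* * ip x y.
Proof. by rewrite ipC ipZl rmorphM /= -ipC. Qed.
Lemma ip_ge0 x : 0 <= ip x x. Proof. by case: hip. Qed.
Lemma ip_eq0 x : ip x x = 0 -> x = 0. Proof. by case: hip => _ _ _ _; apply. Qed.

Definition G x := complex.Re (ip x x).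
Lemma ip_real x : ip x x = (G x)%:C.
Proof.
have h := ip_ge0 x; rewrite /G.
by move: h; case: (ip x x) => a b; rewrite lecE /= => /andP[/eqP -> _].
Qed.
Lemma G_ge0 x : 0 <= G x.
Proof. by have := ip_ge0 x; rewrite ip_real lecR. Qed.
Lemma G_gt0 {x} : x <> 0 -> 0 < G x.
Proof.
move=> hx; rewrite lt_def G_ge0 andbT; apply/eqP => h.
by apply: hx; apply: ip_eq0; rewrite ip_real h.
Qed.

Lemma ipE (a b : R) X1 X2 Y1 Y2 :
  ip (a%:C *: X1 + b%:C *: X2) (a%:C *: Y1 + b%:C *: Y2) =
  (a * a)%:C * ip X1 Y1 + (a * b)%:C * (ip X1 Y2 + ip X2 Y1) + (b * b)%:C * ip X2 Y2.
Proof.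
rewrite !ipDl !ipDr !ipZl !ipZr !cjR !rmorphM /=; ring.
Qed.

Lemma ReE (a b : R) X1 X2 Y1 Y2 :
  complex.Re (ip (a%:C *: X1 + b%:C *: X2) (a%:C *: Y1 + b%:C *: Y2)) =
  (a * a) * complex.Re (ip X1 Y1) + (a * b) * complex.Re (ip X1 Y2 + ip X2 Y1)
  + (b * b) * complex.Re (ip X2 Y2).
Proof. by rewrite ipE !ReD !ReRM ReD. Qed.

Lemma ipS (s : R) x y : ip (s%:C *: x) (s%:C *: y) = (s * s)%:C * ip x y.
Proof. by rewrite ipZl ipZr cjR rmorphM /=; ring. Qed.

Lemma normalize x : x <> 0 ->
  ip ((Num.sqrt (G x))^-1%:C *: x) ((Num.sqrt (G x))^-1%:C *: x) = 1.
Proof.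
move=> hx; have g0 := G_gt0 hx.
rewrite ipS ip_real -rmorphM; congr (_%:C).
rewrite -expr2 exprVn sqr_sqrtr ?(ltW g0) // mulVf //; exact: lt0r_neq0.
Qed.

Lemma lin0 {D : set V} {A : V -> V} : is_subspace D -> linear_on D A -> A 0 = 0.
Proof.
move=> [D0 _] Al; have := Al 1 0 0 D0 D0.
rewrite !scale1r addr0 => h.
by rewrite -[RHS](subrr (A 0)) {2}h addrK.
Qed.

Lemma linZ {D : set V} {A : V -> V} {s : C} {x} : is_subspace D -> linear_on D A -> D x -> A (s *: x) = s *: A x.
Proof.
move=> hD Al Dx; have [D0 _] := hD.
by have := Al s x 0 Dx D0; rewrite !addr0 (lin0 hD Al) addr0.
Qed.

Lemma DZ {D : set V} {s : C} {x} : is_subspace D -> D x -> D (s *: x).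
Proof. by move=> [D0 Dl] Dx; have := Dl s x 0 Dx D0; rewrite addr0. Qed.

Lemma DZZ {D : set V} (a b : C) {x y} : is_subspace D -> D x -> D y -> D (a *: x + b *: y).
Proof. by move=> hD Dx Dy; case: (hD) => _ Dl; apply: Dl => //; apply: DZ. Qed.

Lemma linZZ {D : set V} {A : V -> V} (a b : C) {x y} : is_subspace D -> linear_on D A -> D x -> D y ->
  A (a *: x + b *: y) = a *: A x + b *: A y.
Proof.
move=> hD Al Dx Dy; rewrite Al //; last exact: DZ.
by rewrite (linZ hD Al).
Qed.

Lemma nr_convex (D : set V) (A : V -> V) : is_subspace D -> linear_on D A ->
  forall u v r, numrange ip D A u -> numrange ip D A v -> u < r -> r < v ->
  numrange ip D A r.
Proof.
move=> hD Al u v r [x [Dx xx] hu] [y [Dy yy] hv] ur rv.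
pose Z (a b : R) := a%:C *: x + b%:C *: y.
pose k := complex.Re (ip (A x) y + ip (A y) x).
pose m := complex.Re (ip x y + ip y x).
pose F z := complex.Re (ip (A z) z).
have FZ a b : F (Z a b) = a * a * u + a * b * k + b * b * v.
  by rewrite /F /Z (linZZ _ _ hD Al) // ReE hu hv.
have GZ a b : G (Z a b) = a * a + a * b * m + b * b.
  by rewrite /G /Z ReE xx yy Re1 !mulr1.
have DZab a b : D (Z a b) by apply: DZZ.
pose p : {poly R} := (u - r)%:P * (1 - 'X) ^+ 2 + (k - r * m)%:P * ((1 - 'X) * 'X)
   + (v - r)%:P * 'X ^+ 2.
have evp t : p.[t] = F (Z (1 - t) t) - r * G (Z (1 - t) t).
  rewrite FZ GZ /p !hornerE /=; ring.
have [t tin rt] := @polyrcf.poly_ivt R p 0 1 ler01 (ltac:(rewrite !evp !FZ !GZ; nra)).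
move: rt; rewrite /root evp subr_eq0 => /eqP hFG.
move: tin; rewrite in_itv /= => /andP[t0 t1].
have Znz : Z (1 - t) t <> 0.
  move=> hZ.
  have e1 : Z (1 - t) 0 = Z 0 (- t).
    rewrite /Z !rmorph0 !scale0r addr0 add0r rmorphN scaleNr.
    by apply/eqP; rewrite -subr_eq0 opprK; apply/eqP.
  have h1 := congr1 F e1; have h2 := congr1 G e1.
  rewrite !FZ in h1; rewrite !GZ in h2.
  move: h1 h2 ur rv; clear -t; move=> h1 h2 ur rv.
  have ht : t = 1 / 2 by nra.
  rewrite ht in h1; nra.
have g0 := G_gt0 Znz.
set z := Z (1 - t) t in hFG Znz g0.
pose s : R := (Num.sqrt (G z))^-1.
exists (s%:C *: z).
  split; first exact: (DZ hD (DZab _ _)).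
  exact: normalize.
rewrite (linZ hD Al) //; last exact: DZab.
rewrite (ipZl (s%:C) (A z) (s%:C *: z)) (ipZr (s%:C) (A z) z) cjR mulrA -rmorphM ReRM -/(F z) hFG.
have ss : s * s = (G z)^-1 by rewrite /s -expr2 exprVn sqr_sqrtr // ltW.
by rewrite ss mulrCA mulVf ?mulr1 // lt0r_neq0.
Qed.

Lemma nr_nonempty (D : set V) (A : V -> V) : is_subspace D -> hdense ip D ->
  (exists x0 : V, x0 <> 0) -> exists r, numrange ip D A r.
Proof.
move=> hD hd [x0 hx0].
have g0 := G_gt0 hx0.
have hpos : 0 < hnorm ip x0 by rewrite /hnorm sqrtr_gt0.
have [y Dy hy] := hd x0 _ hpos.
have yn0 : y <> 0 by move=> y0; move: hy; rewrite y0 subr0 ltxx.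
pose s : R := (Num.sqrt (G y))^-1.
exists (complex.Re (ip (A (s%:C *: y)) (s%:C *: y))).
exists (s%:C *: y) => //; split; first exact: (DZ hD Dy).
exact: normalize.
Qed.

Lemma cjRe (z : C) : complex.Re (Num.conj z) = complex.Re z.
Proof. by case: z. Qed.

Lemma hnormE x : hnorm ip x = Num.sqrt (G x).
Proof. by []. Qed.

Lemma nr_bounded (B : V -> V) : (exists M, forall x, hnorm ip (B x) <= M * hnorm ip x) ->
  exists K, forall r, numrange ip setT B r -> `|r| <= K.
Proof.
move=> [M hM]; exists (`|M| + 1) => _ [x [_ xx] <-].
set K := `|M| + 1.
have Gx : G x = 1 by rewrite /G xx.
have hx : hnorm ip x = 1 by rewrite hnormE Gx sqrtr1.
set n := G (B x).
have n0 : 0 <= n := G_ge0 _.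
have hn : n <= K ^+ 2.
  have := hM x; rewrite hx mulr1 hnormE -/n => h.
  have h0 : 0 <= Num.sqrt n := sqrtr_ge0 _.
  have : n = Num.sqrt n ^+ 2 by rewrite sqr_sqrtr.
  have := normr_ge0 M; have := ler_norm M; rewrite /K; nra.
set r := complex.Re (ip (B x) x).
have Q t : 0 <= 1 + 2 * t * r + t * t * n.
  have := G_ge0 (1%:C *: x + t%:C *: B x).
  have e : complex.Re (ip x (B x)) = r by rewrite (ipC (B x) x) cjRe.
  rewrite /G ReE -!/(G _) Gx -/n ReD e.
  by rewrite mul1r mulr1; lra.
have K0 : 0 < K by rewrite /K; have := normr_ge0 M; lra.
have := Q (- (r / K ^+ 2)).
set u := r / K ^+ 2.
have ru : r = u * K ^+ 2 by rewrite /u mulfVK // expf_neq0 // lt0r_neq0.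
move=> hq.
have hu : u * u * (K ^+ 2) <= 1 by rewrite ru in hq; nra.
rewrite ler_norml; apply/andP; split; nra.
Qed.

End Hil.


Section Clo.
Variable R : realType.

Definition convexR (E : set R) := forall u v r, E u -> E v -> u < r -> r < v -> E r.

Lemma ball_conv (E : set R) (r e : R) : convexR E -> 0 < e ->
  (exists2 u, E u & u < r + e) -> (exists2 v, E v & r - e < v) ->
  exists2 w, E w & `|r - w| < e.
Proof.
move=> hc e0 [u Eu hu] [v Ev hv].
case: (ltP (r - e) u) => hu2.
  by exists u => //; rewrite ltr_norml; apply/andP; split; lra.
case: (ltP v (r + e)) => hv2.
  by exists v => //; rewrite ltr_norml; apply/andP; split; lra.
exists r; last by rewrite subrr normr0.
by apply: (hc u v) => //; lra.
Qed.

Lemma OA_eq (E : set R) : E !=set0 -> convexR E ->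
  closure [set r%:E | r in E] =
  [set x | (ereal_inf [set r%:E | r in E] <= x)%E /\ (x <= ereal_sup [set r%:E | r in E])%E].
Proof.
move=> [u0 Eu0] hc.
set F := [set r%:E | r in E].
apply/seteqP; split.
  have cl : closed [set x | (ereal_inf F <= x)%E /\ (x <= ereal_sup F)%E].
    exact: (closedI (@closed_ereal_le_ereal R _) (@closed_ereal_ge_ereal R _)).
  have sub : F `<=` [set x | (ereal_inf F <= x)%E /\ (x <= ereal_sup F)%E].
    by move=> x Fx; split; [apply: ereal_inf_lbound | apply: ereal_sup_ubound].
  by move=> x /(closureS sub); rewrite -((closure_id _).1 cl).
move=> x [Ix xS] B nB.
case: x Ix xS nB => [r| |] Ix xS nB.
- move: nB; rewrite /nbhs /= => /nbhs_ballP [e /= e0 hb].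
  have [w Ew hw] : exists2 w, E w & `|r - w| < e.
    apply: ball_conv => //.
      have : (ereal_inf F < (r + e)%:E)%E by apply: (le_lt_trans Ix); rewrite lte_fin; lra.
      by move/ereal_inf_lt => [_ [y Ey <-]]; rewrite lte_fin => hy; exists y.
    have : ((r - e)%:E < ereal_sup F)%E by apply: (lt_le_trans _ xS); rewrite lte_fin; lra.
    by move/ereal_sup_gt => [_ [y Ey <-]]; rewrite lte_fin => hy; exists y.
  exists w%:E; split; first by exists w.
  by apply: hb; rewrite /ball /=.
- move: nB; rewrite /nbhs /= => -[M [_ hM]].
  have : (M%:E < ereal_sup F)%E.
    have -> : ereal_sup F = +oo%E by apply/eqP; move: xS; rewrite leye_eq.
    exact: ltry.
  move/ereal_sup_gt => [y Fy hy]; exists y; split => //; exact: hM.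
- move: nB; rewrite /nbhs /= => -[M [_ hM]].
  have : (ereal_inf F < M%:E)%E.
    have -> : ereal_inf F = -oo%E by apply/eqP; move: Ix; rewrite leeNy_eq.
    exact: ltNyr.
  move/ereal_inf_lt => [y Fy hy]; exists y; split => //; exact: hM.
Qed.

Definition infR (E : set R) := - sup [set - x | x in E].

Lemma OB_eq (E : set R) : E !=set0 -> (exists K, forall r, E r -> `|r| <= K) -> convexR E ->
  closure E = [set x | infR E <= x /\ x <= sup E].
Proof.
move=> [u0 Eu0] [K hK] hc.
have hsE : has_sup E.
  split; first by exists u0.
  by exists K => r Er; have := hK r Er; rewrite ler_norml => /andP[].
have hsN : has_sup [set - x | x in E].
  split; first by exists (- u0), u0.
  by exists K => _ [r Er <-]; have := hK r Er; rewrite ler_norml => /andP[]; lra.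
have ub r : E r -> r <= sup E by move=> Er; apply: sup_upper_bound.
have lb r : E r -> infR E <= r.
  move=> Er; rewrite /infR lerNl; apply: sup_upper_bound => //; by exists r.
apply/seteqP; split.
  have cl : closed [set x | infR E <= x /\ x <= sup E].
    exact: (closedI (@closed_ge R _) (@closed_le R _)).
  have sub : E `<=` [set x | infR E <= x /\ x <= sup E].
    by move=> x Ex; split; [apply: lb | apply: ub].
  by move=> x /(closureS sub); rewrite -((closure_id _).1 cl).
move=> r [Ir rS] B /nbhs_ballP [e /= e0 hb].
have [w Ew hw] : exists2 w, E w & `|r - w| < e.
  apply: ball_conv => //.
    have [_ [y Ey <-] hy] := sup_adherent e0 hsN.
    by exists y => //; move: hy Ir; rewrite /infR; lra.
  have [y Ey hy] := sup_adherent e0 hsE.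
  by exists y => //; lra.
by exists w; split => //; apply: hb; rewrite /ball /=.
Qed.

End Clo.


Section Main.
Variable R : realType.
Local Notation C := R[i].

Definition OA (I S : \bar R) := [set x : \bar R | (I <= x)%E /\ (x <= S)%E].
Definition OAe (eps : R) (I S : \bar R) :=
  [set x : \bar R | (I - eps%:E <= x)%E /\ (x <= S + eps%:E)%E].
Definition OB (mB MB : R) := [set x : R | mB <= x /\ x <= MB].

Ltac okA := rewrite /OA /=; split; rewrite ?lee_fin ?leey ?leNye //; lra.
Ltac nb := rewrite ler_norml; apply/andP; split; lra.

Lemma NEAR (eps : R) (I S : \bar R) a : 0 < eps ->
  (exists u : R, OA I S u%:E) ->
  OAe eps I S a%:E -> exists a', OA I S a'%:E /\ `|a - a'| <= eps.
Proof.
move=> heps [u [Iu uS]] [Ia aS].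
case: I Iu Ia => [i| |] //= Iu Ia; case: S uS aS => [s| |] //= uS aS;
  rewrite ?lee_fin in Iu Ia uS aS *.
- case: (leP i a) => hia; case: (leP a s) => has.
  + by exists a; split; [okA | nb].
  + by exists s; split; [okA | nb].
  + by exists i; split; [okA | nb].
  + lra.
- case: (leP i a) => hia.
  + by exists a; split; [okA | nb].
  + by exists i; split; [okA | nb].
- case: (leP a s) => has.
  + by exists a; split; [okA | nb].
  + by exists s; split; [okA | nb].
- by exists a; split; [okA | nb].
Qed.

Lemma IN (c d eps : R) (I S : \bar R) (mB MB a b : R) (v r : C) : OA I S a%:E -> OB mB MB b -> Nm v < eps ->
  pfun c d a b r - v * qf c d r = 0 -> W_Omega_eps c d (OA I S) (OB mB MB) eps r.
Proof.
move=> hA hB hv hP.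
have hP' : pfun c d a b r = v * qf c d r by apply/eqP; rewrite -subr_eq0 hP.
case: (pselect (W_Omega c d (OA I S) (OB mB MB) r)) => hW; [by left|right].
have hq : qf c d r != 0.
  apply/eqP => hq0; apply: hW; exists a%:E, b; split => //; left; exists a => //.
  by rewrite hP' hq0 mulr0.
have ht : tfun c d a b r = v by rewrite t_p // hP' mulfK.
split.
- by move=> hr; move/eqP: hq; apply; apply/q_eq0; left.
- by move=> hr; move/eqP: hq; apply; apply/q_eq0; right.
- exact: hW.
- by exists a%:E, b; split => //; exists a => //; rewrite ht Nm_lt.
Qed.

Lemma R2L (c d eps : R) (I S : \bar R) (mB MB : R) (w : C) : 0 < eps -> (exists u : R, OA I S u%:E) ->
  W_Omega c d (OAe eps I S) (OB mB MB) w ->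
  closure_inC (W_Omega_eps c d (OA I S) (OB mB MB) eps) w.
Proof.
move=> heps hu [alpha [beta [hA hB hcase]]].
case: hcase => [[a ea hp]|[hinf hdel]].
- rewrite ea in hA.
  have [a' [hA' ha']] := NEAR heps hu hA.
  move=> e e0.
  set x := a' - a.
  set Qn := Nm (qf c d w).
  have Qn0 : 0 <= Qn := Nm_ge0 _.
  have e40 : 0 < e ^+ 4 by rewrite exprn_gt0.
  pose g := e ^+ 4 / (e ^+ 4 + eps * Qn + 1).
  have den0 : 0 < e ^+ 4 + eps * Qn + 1 by have := mulr_ge0 (ltW heps) Qn0; lra.
  have g0 : 0 < g by rewrite /g divr_gt0.
  have g1 : g < 1 by rewrite /g ltr_pdivrMr // mul1r; have := mulr_ge0 (ltW heps) Qn0; lra.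
  have gQ : g * (eps * Qn) < e ^+ 4.
    rewrite /g mulrAC ltr_pdivrMr //; have := mulr_ge0 (ltW heps) Qn0; nra.
  pose v : C := (x * (1 - g))%:C.
  have hPw : pfun c d a' beta w - v * qf c d w = (x * g)%:C * qf c d w.
    rewrite (p_shift c d a a' beta w) hp add0r /v -/x -mulrBl -rmorphB; congr (_%:C * _).
    ring.
  have hx : `|x| <= eps by rewrite /x distrC.
  have : Nm (pfun c d a' beta w - v * qf c d w) < e ^+ 4.
    rewrite hPw NmM NmR -/Qn normrM (ger0_norm (ltW g0)).
    apply: le_lt_trans gQ; have h1 : 0 <= (eps - `|x|) * g by apply: mulr_ge0; lra.
    nra.
  rewrite p_exp => /(RL4 e0) [r [hr hrw]].
  exists r; last by rewrite Nm_lt.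
  apply: (IN hA' hB _ _ (v := v)); last by rewrite p_exp.
  rewrite /v NmR normrM (@ger0_norm _ (1 - g)); last by lra.
  have := normr_ge0 x; nra.
- clear hu; move=> e e0; exists w; last by rewrite subrr normr0 ltcR.
  left; exists alpha, beta; split => //; last by right.
  case: hinf => ha; rewrite ha in hA *.
  + move: hA; rewrite /OAe /OA /= => -[_]; case: S => [s||] //= h;
      rewrite ?leye_eq // in h; by split; rewrite ?leey.
  + move: hA; rewrite /OAe /OA /= => -[]; case: I => [i||] //= h _;
      rewrite ?leeNy_eq // in h; by split; rewrite ?leNye.
Qed.

Lemma EXTRACT (c d eps : R) (I S : \bar R) (mB MB : R) (z : C) : 0 <= eps ->
  W_Omega_eps c d (OA I S) (OB mB MB) eps z ->
  ((z = delta_p c d \/ z = delta_m c d) /\ (OA I S +oo%E \/ OA I S -oo%E)) \/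
  exists a b (tau : C), [/\ OA I S a%:E, OB mB MB b, Nm tau <= eps &
     pfun c d a b z = tau * qf c d z].
Proof.
move=> heps.
case => [[alpha [beta [hA hB [[a ea hp]|[hinf hdel]]]]]|[hp hm hW [alpha [beta [hA hB [a ea ht]]]]]].
- right; exists a, beta, 0; rewrite -ea; split => //.
    by rewrite NmR normr0.
  by rewrite hp mul0r.
- left; split => //; case: hinf => ha; [left|right]; by rewrite -ha.
- right; exists a, beta, (tfun c d a beta z); rewrite -ea; split => //.
    by rewrite Nm_lt in ht; exact: ltW.
  have hq : qf c d z != 0.
    by apply/eqP => /q_eq0 [] h; [apply: hp|apply: hm].
  by rewrite t_p // divfK.
Qed.

Lemma qdiff (c d : R) (z w : C) : qf c d z - qf c d w = - ((z - w) * (z + w + 'i * d%:C)).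
Proof. by rewrite /qf; ring. Qed.

Lemma Nm_i (d : R) : Nm ('i * d%:C) = `|d|.
Proof.
rewrite NmM NmR /Nm normc_def /= expr0n /= add0r expr1n sqrtr1 mul1r //.
Qed.

Lemma Nm_qdiff (c d : R) (z w : C) : 0 <= d ->
  Nm (qf c d z - qf c d w) <= Nm (z - w) * (Nm z + Nm w + d).
Proof.
move=> d0; rewrite qdiff NmN NmM; apply: ler_wpM2l; first exact: Nm_ge0.
have := NmD (z + w) ('i * d%:C); have := NmD z w; rewrite Nm_i ger0_norm //; lra.
Qed.

Lemma Nm_near (z w : C) : Nm w - Nm (z - w) <= Nm z /\ Nm z <= Nm w + Nm (z - w).
Proof.
split; last by have := NmD (z - w) w; rewrite subrK; lra.
by have := NmD (w - z) z; rewrite subrK NmB; lra.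
Qed.

Lemma DELTA (c d eps i s mB MB : R) (w : C) : 0 < d -> 0 < eps -> mB <= MB ->
  qf c d w = 0 -> w != 0 -> (0 < mB \/ MB < 0) ->
  closure_inC (W_Omega_eps c d (OA i%:E s%:E) (OB mB MB) eps) w -> False.
Proof.
move=> d0 heps hmB hq hw0 hsgn hcl.
pose m := Num.min `|mB| `|MB|.
have m0 : 0 < m.
  rewrite /m lt_min !normr_gt0; apply/andP; split; apply/eqP; case: hsgn; lra.
have hm b : OB mB MB b -> m <= `|b|.
  move=> [h1 h2]; rewrite /m ge_min; case: hsgn => h.
    by rewrite (ger0_norm (ltW h)) (@ger0_norm _ b) ?lerD2 ?h1 //; lra.
  by rewrite (@ltr0_norm _ MB h) (@ler0_norm _ b) ?lerN2 ?h2 ?orbT //; lra.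
pose K := `|i| + `|s|.
have hK a : OA i%:E s%:E a%:E -> `|a| <= K.
  rewrite /OA /= !lee_fin => -[h1 h2]; rewrite /K ler_norml.
  have := ler_norm i; have := ler_norm (- i); rewrite normrN.
  have := ler_norm s; have := ler_norm (- s); rewrite normrN.
  move=> *; apply/andP; split; lra.
pose Nw := Nm w.
have Nw0 : 0 < Nw by rewrite lt_def Nm_eq0 hw0 Nm_ge0.
pose H := d + 2 * Nw + 1.
pose G' := K + eps + (Nw + 1) ^+ 2.
have K0 : 0 <= K by rewrite /K addr_ge0.
have H0 : 0 < H by rewrite /H; lra.
have G0 : 0 < G' by rewrite /G'; have := sqr_ge0 (Nw + 1); lra.
pose e := Num.min 1 (Num.min (Nw / 2) (m * Nw ^+ 2 / (8 * G' * H))).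
have e0 : 0 < e.
  rewrite /e !lt_min ltr01 /=; apply/andP; split; first by lra.
  by apply: divr_gt0; [apply: mulr_gt0 => //; apply: exprn_gt0 | apply: mulr_gt0 => //; apply: mulr_gt0 => //].
have e1 : e <= 1 by rewrite /e ge_min lexx.
have e2 : e <= Nw / 2 by rewrite /e ge_min; apply/orP; right; rewrite ge_min lexx.
have e3 : e * (8 * G' * H) <= m * Nw ^+ 2.
  rewrite -ler_pdivlMr; last by apply: mulr_gt0 => //; apply: mulr_gt0.
  by rewrite /e ge_min; apply/orP; right; rewrite ge_min lexx orbT.
have [z hz hzw] := hcl e e0.
rewrite Nm_lt in hzw.
have [[_ [hinf|hinf]]|[a [b [tau [hA hB htau hp]]]]] := EXTRACT (ltW heps) hz.
- by move: hinf; rewrite /OA /= => -[_].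
- by move: hinf; rewrite /OA /= => -[].
have eq1 : b%:C * z ^+ 2 = (a%:C - z ^+ 2 - tau) * qf c d z.
  move: hp; rewrite /pfun -/(qf c d z) => hp'.
  rewrite (_ : (a%:C - z ^+ 2 - tau) * qf c d z = (a%:C - z ^+ 2) * qf c d z - tau * qf c d z); last by ring.
  by rewrite -hp'; ring.
pose Nz := Nm z.
have [nz1 nz2] := Nm_near z w.
have F1 : `|b| * Nz ^+ 2 <= (K + Nz ^+ 2 + eps) * (Nm (z - w) * (Nz + Nw + d)).
  have := congr1 (@Nm R) eq1; rewrite NmM NmX NmM NmR -/Nz => ->.
  apply: ler_pM; [exact: Nm_ge0|exact: Nm_ge0| |].
    apply: le_trans (NmD _ _) _; rewrite NmN.
    apply: lerD => //; apply: le_trans (NmD _ _) _; rewrite NmN NmR NmX -/Nz.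
    by apply: lerD => //; apply: hK.
  by have := Nm_qdiff c z w (ltW d0); rewrite hq subr0.
have hb := hm b hB.
have Nzw0 := Nm_ge0 (z - w).
have s1 : Nw / 2 <= Nz by rewrite /Nz; lra.
have s1' : Nw ^+ 2 / 4 <= Nz ^+ 2 by nra.
have s2 : m * (Nw ^+ 2 / 4) <= `|b| * Nz ^+ 2.
  by apply: ler_pM => //; [exact: ltW | apply: divr_ge0 => //; exact: sqr_ge0].
have s3 : K + Nz ^+ 2 + eps <= G'.
  have Nz0 : 0 <= Nz := Nm_ge0 z.
  have : Nz ^+ 2 <= (Nw + 1) ^+ 2 by nra.
  rewrite /G'; lra.
have s4 : Nm (z - w) * (Nz + Nw + d) <= e * H.
  apply: ler_pM => //; first by rewrite addr_ge0 ?Nm_ge0 //; lra.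
    exact: ltW.
  rewrite /H; lra.
have s5 : (K + Nz ^+ 2 + eps) * (Nm (z - w) * (Nz + Nw + d)) <= G' * (e * H).
  apply: ler_pM => //.
    by have := sqr_ge0 Nz; lra.
  by apply: mulr_ge0 => //; rewrite addr_ge0 ?Nm_ge0 //; lra.
have s6 : G' * (e * H) <= m * Nw ^+ 2 / 8 by rewrite ler_pdivlMr //; lra.
have : 0 < m * Nw ^+ 2 by apply: mulr_gt0 => //; apply: exprn_gt0.
lra.
Qed.

Lemma FINALp (eps : R) (I S : \bar R) (mB MB A0 A1 : R) : 0 < eps -> mB <= MB ->
  0 <= A1 -> (exists u : R, OA I S u%:E) ->
  (forall eta, 0 < eta -> exists b a, [/\ OB mB MB b, OA I S a%:E &
      `|a - (A0 + A1 * b)| < eps + eta]) ->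
  exists b, OB mB MB b /\ OAe eps I S (A0 + A1 * b)%:E.
Proof.
move=> heps hmB hA1 [u [Iu uS]] H.
pose p := A0 + A1 * mB; pose q := A0 + A1 * MB.
have hpq : p <= q by rewrite /p /q; nra.
have fb b : OB mB MB b -> p <= A0 + A1 * b <= q.
  by move=> [h1 h2]; apply/andP; split; rewrite /p /q; nra.
have C1 : forall s, S = s%:E -> p <= s + eps.
  move=> s hs; rewrite leNgt; apply/negP => hlt.
  have [b [a [hB [_ aS] ha]]] := H (p - s - eps) (ltac:(lra)).
  rewrite hs lee_fin in aS; have /andP[h1 h2] := fb b hB.
  move: ha; rewrite ltr_norml => /andP[h3 h4]; lra.
have C2 : forall i, I = i%:E -> i - eps <= q.
  move=> i hi; rewrite leNgt; apply/negP => hlt.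
  have [b [a [hB [Ia _] ha]]] := H (i - eps - q) (ltac:(lra)).
  rewrite hi lee_fin in Ia; have /andP[h1 h2] := fb b hB.
  move: ha; rewrite ltr_norml => /andP[h3 h4]; lra.
have hS : (p%:E <= S + eps%:E)%E.
  clear H; move: C1 uS; case: S => [s||] //= C1 uS; rewrite ?leey // lee_fin; exact: C1.
case: (boolP (I - eps%:E <= p%:E)%E) => hI.
  by exists mB; split; [rewrite /OB /=; lra | split].
clear H C1; move: hI C2 Iu; case: I => [i||] //= hI C2 Iu; last by rewrite leNye in hI.
rewrite lee_fin -ltNge in hI.
have hiq := C2 i erefl.
have A10 : 0 < A1 by rewrite lt_def hA1 andbT; apply/eqP => h; move: hpq hiq hI; rewrite /p /q h; lra.
pose x := i - eps.
exists ((x - A0) / A1); split.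
  rewrite /OB /=; split.
    by rewrite ler_pdivlMr //; rewrite /p in hI; rewrite /x; lra.
  by rewrite ler_pdivrMr //; rewrite /q in hiq; rewrite /x; lra.
rewrite mulrC divfK ?lt0r_neq0 // addrC subrK /OAe /= /x; split; first by rewrite lee_fin.
clear hS; move: uS; rewrite lee_fin in Iu; case: S => [s||] //= uS; rewrite ?leey // lee_fin.
rewrite lee_fin in uS; lra.
Qed.

Lemma FINAL (eps : R) (I S : \bar R) (mB MB A0 A1 : R) : 0 < eps -> mB <= MB ->
  (exists u : R, OA I S u%:E) ->
  (forall eta, 0 < eta -> exists b a, [/\ OB mB MB b, OA I S a%:E &
      `|a - (A0 + A1 * b)| < eps + eta]) ->
  exists b, OB mB MB b /\ OAe eps I S (A0 + A1 * b)%:E.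
Proof.
move=> heps hmB hu H.
case: (lerP 0 A1) => hA1; first exact: FINALp.
have H' : forall eta, 0 < eta -> exists b a, [/\ OB mB MB b, OA I S a%:E &
      `|a - ((A0 + A1 * (mB + MB)) + (- A1) * b)| < eps + eta].
  move=> eta he; have [b [a [[h1 h2] hA ha]]] := H eta he.
  exists (mB + MB - b), a; split => //.
    by rewrite /OB /=; split; lra.
  by rewrite (_ : A0 + A1 * (mB + MB) + - A1 * (mB + MB - b) = A0 + A1 * b) //; ring.
have nA1 : 0 <= - A1 by lra.
have [b' [[h1 h2] hA]] := @FINALp eps I S mB MB (A0 + A1 * (mB + MB)) (- A1) heps hmB nA1 hu H'.
exists (mB + MB - b'); split; first by rewrite /OB /=; split; lra.
by rewrite (_ : A0 + A1 * (mB + MB - b') = A0 + A1 * (mB + MB) + - A1 * b') //; ring.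
Qed.

Lemma t_axis (c d a b y : R) : c + d * y + y ^+ 2 != 0 ->
  tfun c d a b (0 +i* y) = (a + y ^+ 2 + y ^+ 2 * b / (c + d * y + y ^+ 2))%:C.
Proof.
move=> hQ; have hq : qf c d (0 +i* y) != 0 by rewrite q_axis; apply/eqP => /complexI /eqP; apply/negP.
rewrite t_p // p_axis q_axis -fmorph_div; congr (_%:C); field.
by [].
Qed.

Lemma tdiff (c d a b : R) (z w : C) :
  tfun c d a b w - tfun c d a b z = (z ^+ 2 - w ^+ 2) + b%:C * (z ^+ 2 / qf c d z - w ^+ 2 / qf c d w).
Proof. by rewrite /tfun -!/(qf c d _); ring. Qed.

Lemma ratio_eq (c d : R) (z w : C) : qf c d z != 0 -> qf c d w != 0 ->
  z ^+ 2 / qf c d z - w ^+ 2 / qf c d w =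
  ((z ^+ 2 - w ^+ 2) * qf c d w + w ^+ 2 * (qf c d w - qf c d z)) / (qf c d z * qf c d w).
Proof. by move=> h1 h2; field; apply/andP; split. Qed.

Lemma AXIS (c d eps : R) (I S : \bar R) (mB MB y : R) : 0 < d -> 0 < eps ->
  c + d * y + y ^+ 2 != 0 ->
  closure_inC (W_Omega_eps c d (OA I S) (OB mB MB) eps) (0 +i* y) ->
  forall eta, 0 < eta -> exists b a, [/\ OB mB MB b, OA I S a%:E &
    `|a - ((- y ^+ 2) + (- (y ^+ 2 / (c + d * y + y ^+ 2))) * b)| < eps + eta].
Proof.
move=> d0 heps hQ hcl eta eta0.
set Q := c + d * y + y ^+ 2 in hQ *.
set w : C := 0 +i* y.
have hqw : qf c d w = Q%:C by rewrite q_axis.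
have qw0 : qf c d w != 0 by rewrite hqw; apply/eqP => /complexI /eqP; apply/negP.
pose Kb := `|mB| + `|MB|.
have hKb b : OB mB MB b -> `|b| <= Kb.
  move=> [h1 h2]; rewrite /Kb ler_norml.
  have := ler_norm mB; have := ler_norm (- mB); rewrite normrN.
  have := ler_norm MB; have := ler_norm (- MB); rewrite normrN.
  move=> *; apply/andP; split; lra.
have Kb0 : 0 <= Kb by rewrite /Kb addr_ge0.
pose Nq := Nm (qf c d w).
have Nq0 : 0 < Nq by rewrite /Nq lt_def Nm_eq0 qw0 Nm_ge0.
pose Nw := Nm w.
have Nw0 : 0 <= Nw := Nm_ge0 w.
pose L := 2 * Nw + 1 + d.
have L0 : 0 < L by rewrite /L; lra.
pose M2 := Kb * (2 * (Nq + Nw ^+ 2) / Nq ^+ 2).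
have M20 : 0 <= M2.
  rewrite /M2; apply: mulr_ge0 => //; apply: divr_ge0; last exact: sqr_ge0.
  by have := sqr_ge0 Nw; lra.
pose Cst := L * (1 + M2).
have Cst0 : 0 < Cst by rewrite /Cst; apply: mulr_gt0 => //; lra.
pose e := Num.min 1 (Num.min (Nq / (2 * L)) (eta / (2 * Cst))).
have e0 : 0 < e.
  rewrite /e !lt_min ltr01 /=; apply/andP; split.
    by apply: divr_gt0 => //; lra.
  by apply: divr_gt0 => //; lra.
have e1 : e <= 1 by rewrite /e ge_min lexx.
have e2 : e * (2 * L) <= Nq.
  rewrite -ler_pdivlMr; last by lra.
  by rewrite /e ge_min; apply/orP; right; rewrite ge_min lexx.
have e3 : e * (2 * Cst) <= eta.
  rewrite -ler_pdivlMr; last by lra.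
  by rewrite /e ge_min; apply/orP; right; rewrite ge_min lexx orbT.
have [z hz hzw] := hcl e e0.
rewrite Nm_lt in hzw.
pose Nzw := Nm (z - w).
have Nzw0 : 0 <= Nzw := Nm_ge0 _.
have hzw' : Nzw < e by exact: hzw.
have [nz1 nz2] := Nm_near z w.
have Nz0 : 0 <= Nm z := Nm_ge0 z.
have hL : Nm z + Nw + d <= L by rewrite /L; lra.
have f1 : Nm (z ^+ 2 - w ^+ 2) <= Nzw * L.
  rewrite (_ : z ^+ 2 - w ^+ 2 = (z - w) * (z + w)); last by ring.
  rewrite NmM; apply: ler_wpM2l => //.
  by apply: le_trans (NmD _ _) _; rewrite /L; lra.
have dq : Nm (qf c d z - qf c d w) <= Nzw * L.
  apply: le_trans (Nm_qdiff c z w (ltW d0)) _.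
  by apply: ler_wpM2l.
have hqz : Nq / 2 <= Nm (qf c d z).
  have := NmBD (qf c d w) (qf c d w - qf c d z).
  rewrite (_ : qf c d w - (qf c d w - qf c d z) = qf c d z); last by ring.
  rewrite (NmB (qf c d w) (qf c d z)) -/Nq.
  have : Nzw * L <= e * L by apply: ler_wpM2r; [lra | exact: ltW].
  lra.
have qz0 : qf c d z != 0.
  by rewrite -Nm_eq0; apply/eqP => h; rewrite h in hqz; lra.
have [[[hd|hd] _]|[a [b [tau [hA hB htau hp]]]]] := EXTRACT (ltW heps) hz.
- by move: qz0; rewrite (_ : qf c d z = 0) ?eqxx //; apply/q_eq0; left.
- by move: qz0; rewrite (_ : qf c d z = 0) ?eqxx //; apply/q_eq0; right.
exists b, a; split => //.
have htz : tfun c d a b z = tau by rewrite t_p // hp mulfK.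
have hb := hKb b hB.
have num : Nm ((z ^+ 2 - w ^+ 2) * qf c d w + w ^+ 2 * (qf c d w - qf c d z))
   <= Nzw * L * (Nq + Nw ^+ 2).
  apply: le_trans (NmD _ _) _; rewrite (NmM (z ^+ 2 - w ^+ 2)) (NmM (w ^+ 2)) NmX -/Nq -/Nw (NmB (qf c d w)).
  have := ler_wpM2r (ltW Nq0) f1.
  have := ler_wpM2l (exprn_ge0 2 Nw0) dq.
  lra.
have rat : Nm (z ^+ 2 / qf c d z - w ^+ 2 / qf c d w)
    <= Nzw * L * (2 * (Nq + Nw ^+ 2) / Nq ^+ 2).
  rewrite ratio_eq // NmM NmV NmM -/Nq.
  have pos : 0 < Nm (qf c d z) * Nq by apply: mulr_gt0 => //; lra.
  rewrite ler_pdivrMr //.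
  apply: le_trans num _.
  have h2 : Nq ^+ 2 / 2 <= Nm (qf c d z) * Nq.
    by rewrite expr2; have := ler_wpM2r (ltW Nq0) hqz; lra.
  have hB0 : 0 <= Nzw * L * (2 * (Nq + Nw ^+ 2) / Nq ^+ 2).
    apply: mulr_ge0; first by apply: mulr_ge0 => //; lra.
    by apply: divr_ge0; [have := sqr_ge0 Nw; lra | exact: sqr_ge0].
  apply: le_trans (ler_wpM2l hB0 h2).
  rewrite (_ : Nzw * L * (2 * (Nq + Nw ^+ 2) / Nq ^+ 2) * (Nq ^+ 2 / 2) = Nzw * L * (Nq + Nw ^+ 2)) //.
  by field; exact: lt0r_neq0.
have tdif : Nm (tfun c d a b w - tfun c d a b z) <= Nzw * Cst.
  rewrite tdiff; apply: le_trans (NmD _ _) _; rewrite NmM NmR.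
  have : `|b| * Nm (z ^+ 2 / qf c d z - w ^+ 2 / qf c d w) <= Kb * (Nzw * L * (2 * (Nq + Nw ^+ 2) / Nq ^+ 2)).
    by apply: ler_pM => //; exact: Nm_ge0.
  rewrite /Cst /M2; move: f1; nra.
have tw : Nm (tfun c d a b w) < eps + eta.
  have := NmD (tfun c d a b w - tfun c d a b z) (tfun c d a b z); rewrite subrK.
  rewrite htz in tdif *.
  have : Nzw * Cst <= e * Cst by apply: ler_wpM2r; [lra | exact: ltW].
  lra.
move: tw; rewrite /w t_axis // NmR.
by rewrite (_ : a + y ^+ 2 + y ^+ 2 * b / Q = a - (- y ^+ 2 + - (y ^+ 2 / Q) * b)) //; ring.
Qed.

Lemma DELTA_ALL (c d eps : R) (I S : \bar R) (mB MB u : R) (w : C) : 0 < d -> 0 < eps -> mB <= MB ->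
  qf c d w = 0 -> w != 0 -> (0 < mB \/ MB < 0) ->
  ~ OA I S +oo%E -> ~ OA I S -oo%E -> OA I S u%:E ->
  closure_inC (W_Omega_eps c d (OA I S) (OB mB MB) eps) w -> False.
Proof.
move=> d0 heps hmB hq hw0 hsgn.
case: I => [i||]; case: S => [s||]; rewrite /OA /= => hp hm [hu1 hu2] hw.
all: try exact: (DELTA d0 heps hmB hq hw0 hsgn hw).
all: try by apply: hp; split; rewrite ?leey.
all: try by apply: hm; split; rewrite ?leNye.
all: by move: hu1 hu2; rewrite ?leeNy_eq ?leye_eq.
Qed.

Theorem MAIN (c d eps : R) (I S : \bar R) (mB MB : R) : 0 < d -> 0 < eps -> mB <= MB ->
  (exists u : R, OA I S u%:E) ->
  closure_inC (W_Omega_eps c d (OA I S) (OB mB MB) eps) `&` @imag_axis R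
  = W_Omega c d (OAe eps I S) (OB mB MB) `&` @imag_axis R.
Proof.
move=> d0 heps hmB hu.
apply/seteqP; split => w [hw hax]; split => //; last exact: R2L.
case: w hw hax => x y hw hax; rewrite /imag_axis /= in hax; subst x.
rewrite /W_Omega /=.
have hOB : OB mB MB mB by rewrite /OB /=; split; lra.
case: (boolP (qf c d (0 +i* y) == 0)) => hq.
- have hdel := (q_eq0 c d (0 +i* y)).1 (eqP hq).
  case: (pselect (OA I S +oo%E)) => hp.
    exists +oo%E, mB; split => //; last by right; split => //; left.
    move: hp; rewrite /OA /OAe /=; clear hu hw; case: S => [s||] //= -[_]; rewrite ?leye_eq //.
    by move=> _; split; rewrite ?leey.
  case: (pselect (OA I S -oo%E)) => hm.
    exists -oo%E, mB; split => //; last by right; split => //; right.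
    move: hm; rewrite /OA /OAe /=; clear hu hw hp; case: I => [i||] //= -[]; rewrite ?leeNy_eq //.
    by move=> _ _; split; rewrite ?leNye.
  have [u hu'] := hu.
  have hOAe : OAe eps I S u%:E.
    move: hu'; rewrite /OA /OAe /= => -[h1 h2]; split.
      apply: le_trans h1; rewrite geeDl // lee_fin; lra.
    by apply: (le_trans h2); rewrite leeDl // lee_fin; lra.
  case: (pselect (mB <= 0 <= MB)) => h0.
    exists u%:E, 0; split => //.
      by rewrite /OB /=; move/andP: h0.
    by left; exists u => //; rewrite /pfun -/(qf c d _) (eqP hq) mulr0 rmorph0 mul0r subr0.
  case: (boolP ((0 +i* y : C) == 0)) => hw0.
    exists u%:E, mB; split => //.
    by left; exists u => //; rewrite /pfun -/(qf c d _) (eqP hq) (eqP hw0) mulr0 expr0n /= mulr0 subr0.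
  exfalso.
  have hsgn : 0 < mB \/ MB < 0.
    case: (ltP 0 mB) => h1; first by left.
    case: (ltP MB 0) => h2; first by right.
    by exfalso; apply: h0; apply/andP; split.
  exact: (DELTA_ALL d0 heps hmB (eqP hq) hw0 hsgn hp hm hu' hw).
- set Q := c + d * y + y ^+ 2.
  have hQ : Q != 0.
    by apply: contra hq; rewrite q_axis /Q => /eqP ->; rewrite rmorph0.
  have [b [hB hA]] := FINAL heps hmB hu (AXIS d0 heps hQ hw).
  exists (- y ^+ 2 + - (y ^+ 2 / Q) * b)%:E, b; split => //.
  left; exists (- y ^+ 2 + - (y ^+ 2 / Q) * b) => //.
  rewrite p_axis -/Q (_ : (- y ^+ 2 + - (y ^+ 2 / Q) * b + y ^+ 2) * Q + b * y ^+ 2 = 0) ?rmorph0 //.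
  by field.
Qed.

End Main.


Unset Implicit Arguments.

Theorem proposition4p7 (R : realType) (V : lmodType R[i]) (ip : V -> V -> R[i])
  (hV : is_hilbert ip)
  (DA : set V) (A : V -> V) (hA : selfadjoint ip DA A)
  (B : V -> V) (hB : bounded_selfadjoint ip B) (hB0 : exists x, B x <> 0)
  (c d : R) (hc : 0 <= c) (hd : 0 < d)
  (eps : R) (heps : 0 < eps)
  (DAe : set V) (Ae : V -> V) (hAe : selfadjoint ip DAe Ae)
  (hWAe : numrange_cl_ext ip DAe Ae =
     [set x : \bar R | (ereal_inf [set r%:E | r in numrange ip DA A] - eps%:E <= x)%E
                       /\ (x <= ereal_sup [set r%:E | r in numrange ip DA A] + eps%:E)%E]) :
  closure_inC (W_Omega_eps c d (numrange_cl_ext ip DA A) (numrange_cl ip B) eps)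
    `&` @imag_axis R
  = W_Omega c d (numrange_cl_ext ip DAe Ae) (numrange_cl ip B) `&` @imag_axis R.
Proof.
have hip := hV.1.
have [hsA hlA hdA _] := hA.
have [[hsB hlB hdB _] hMB] := hB.
have hnz : exists x0 : V, x0 <> 0 by case: hB0 => x hx; exists (B x).
have [u0 hu0] := nr_nonempty hip A hsA hdA hnz.
have cvA : convexR (numrange ip DA A) := nr_convex hip hsA hlA.
have [b0 hb0] := nr_nonempty hip B hsB hdB hnz.
have cvB : convexR (numrange ip setT B) := nr_convex hip hsB hlB.
have bdB := nr_bounded hip hMB.
have eqA := OA_eq (ex_intro _ u0 hu0) cvA.
have eqB := OB_eq (ex_intro _ b0 hb0) bdB cvB.
rewrite hWAe /numrange_cl_ext /numrange_cl eqA eqB.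
have hu : exists u : R, OA (ereal_inf [set r%:E | r in numrange ip DA A])
    (ereal_sup [set r%:E | r in numrange ip DA A]) u%:E.
  exists u0; split; [apply: ereal_inf_lbound | apply: ereal_sup_ubound]; by exists u0.
have hmB : infR (numrange ip setT B) <= sup (numrange ip setT B).
  have : closure (numrange ip setT B) b0 by apply: subset_closure.
  by rewrite eqB => -[h1 h2]; apply: le_trans h2.
exact: (MAIN c hd heps hmB hu).
Qed.
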